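(* Let $q$ be a power of an odd prime. Let $H_q$ be the graph obtained from $G_q$ by adding $q+1$ new vertices $y$ and $z_b$ ($b\in\mathbb{F}_q$), where each $z_b$ is joined to all vertices $(b,x)$ with $x\in\mathbb{F}_q$, $y$ is joined to every $z_b$, and there are no other new edges. Then $H_q$ is isomorphic to the graph whose vertices are the $1$-dimensional subspaces of $\mathbb{F}_q^3$, with distinct vertices $(x_0,x_1,x_2)$ and $(y_0,y_1,y_2)$ (homogeneous coordinates) adjacent if and only if $x_0y_2+x_2y_0=x_1y_1$. An isomorphism is given by $(0,b)\mapsto(1,0,2^{-1}b)$ for $b\in\mathbb{F}_q$; $(a,b)\mapsto(1,a,2^{-1}(b-a^2))$ for $a\ne0$; $y\mapsto(0,0,1)$; $z_b\mapsto(0,1,b)$.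
   Context: For a power $q$ of an odd prime, let $A=\{(a,a^2):a\in\mathbb{F}_q\}$. The graph $G_q$ has vertex set $\mathbb{F}_q\times\mathbb{F}_q$, and distinct vertices $(x_1,x_2)$, $(y_1,y_2)$ are adjacent if and only if $(x_1+y_1,x_2+y_2)\in A$, i.e. $(x_1+y_1)^2=x_2+y_2$; $G_q$ has no loops. *)

(* Defs.v *)
From HB Require Import structures.
From mathcomp Require Import all_boot all_order all_algebra all_field.
Set Implicit Arguments. Unset Strict Implicit. Unset Printing Implicit Defensive.
Import Order.TTheory GRing.Theory Num.Theory.
Local Open Scope ring_scope.

Section Defs.
Variable F : finFieldType.

Definition vec3 (x0 x1 x2 : F) : 'rV[F]_3 :=
  \row_(i < 3) [:: x0; x1; x2]`_i.

Definition crd (v : 'rV[F]_3) (i : nat) : F := v ord0 (inord i).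

Definition qform (x y : 'rV[F]_3) : F :=
  crd x 0 * crd y 2 + crd x 2 * crd y 0 - crd x 1 * crd y 1.

Definition line (v : 'rV[F]_3) : {set 'rV[F]_3} := [set a *: v | a : F].

Definition is_point (S : {set 'rV[F]_3}) : bool :=
  [exists v : 'rV[F]_3, (v != 0) && (S == line v)].

Definition PG := {S : {set 'rV[F]_3} | is_point S}.

(** Distinct points are adjacent iff x0 y2 + x2 y0 = x1 y1 for (any, equivalently
    some) homogeneous coordinates. *)
Definition adjP (L M : PG) : bool :=
  (L != M) && [exists x : 'rV[F]_3, exists y : 'rV[F]_3,
     [&& x \in val L, y \in val M, x != 0, y != 0 & qform x y == 0]].

Lemma line_point (v : 'rV[F]_3) : v != 0 -> is_point (line v).
Proof. by move=> hv; apply/existsP; exists v; rewrite hv eqxx. Qed.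

Lemma vec3_001_neq0 : vec3 0 0 1 != 0.
Proof.
apply/eqP => /matrixP /(_ ord0 (inord 2)).
by rewrite !mxE inordK //= => /eqP; rewrite oner_eq0.
Qed.

Definition pt0 : PG := exist _ (line (vec3 0 0 1)) (line_point vec3_001_neq0).

(** The point with homogeneous coordinates (x0 : x1 : x2)
    (only used with nonzero vectors; pt0 is an irrelevant default). *)
Definition pt (x0 x1 x2 : F) : PG := insubd pt0 (line (vec3 x0 x1 x2)).

Definition adjG (u v : F * F) : bool :=
  (u != v) && ((u.1 + v.1) ^+ 2 == u.2 + v.2).

(** Vertices of H_q: inl (x1,x2) is a vertex of G_q, inr None is y,
    inr (Some b) is z_b. *)
Definition HV := ((F * F) + option F)%type.

Definition adjH (u v : HV) : bool :=
  match u, v with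
  | inl a, inl b => adjG a b
  | inl a, inr (Some b) => a.1 == b
  | inr (Some b), inl a => a.1 == b
  | inr None, inr (Some _) => true
  | inr (Some _), inr None => true
  | _, _ => false
  end.

Definition phi (u : HV) : PG :=
  match u with
  | inl (a, b) => if a == 0 then pt 1 0 (b / 2%:R)
                  else pt 1 a ((b - a ^+ 2) / 2%:R)
  | inr None => pt 0 0 1
  | inr (Some b) => pt 0 1 b
  end.

End Defs.

(* Main.v *)
Require Import Defs.
From HB Require Import structures.
From mathcomp Require Import all_boot all_order all_algebra all_field.
From mathcomp Require Import ring.
Import Order.TTheory GRing.Theory Num.Theory.
Local Open Scope ring_scope.

Section Aux.
Variable F : finFieldType.

Lemma crd_vec3 (a b c : F) :
  [/\ crd (vec3 a b c) 0 = a, crd (vec3 a b c) 1 = b & crd (vec3 a b c) 2 = c].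
Proof. by rewrite /crd !mxE !inordK. Qed.

Lemma crdZ (k : F) v i : crd (k *: v) i = k * crd v i.
Proof. by rewrite /crd mxE. Qed.

Lemma vec3_crd (v : 'rV[F]_3) : v = vec3 (crd v 0) (crd v 1) (crd v 2).
Proof.
apply/rowP => j; rewrite !mxE /crd.
have e : forall k (h : (k < 3)%N), v 0 (Ordinal h) = v ord0 (inord k).
  by move=> k h; congr (v _ _); apply/val_inj; rewrite /= inordK.
by case: j => [[|[|[|j]]] hj] //=; rewrite -e.
Qed.

Lemma vec3_inj (a b c a' b' c' : F) :
  vec3 a b c = vec3 a' b' c' -> [/\ a = a', b = b' & c = c'].
Proof.
move=> e; have := crd_vec3 a b c; rewrite e.
by case: (crd_vec3 a' b' c') => -> -> -> [-> -> ->].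
Qed.

Lemma vec3Z (k a b c : F) : k *: vec3 a b c = vec3 (k * a) (k * b) (k * c).
Proof. by apply/rowP => j; rewrite !mxE; case: j => [[|[|[|j]]] hj]. Qed.

Lemma vec3_eq0 (a b c : F) : (vec3 a b c == 0) = [&& a == 0, b == 0 & c == 0].
Proof.
apply/eqP/idP.
  have -> : (0 : 'rV[F]_3) = vec3 0 0 0 by apply/rowP => j; rewrite !mxE; case: j => [[|[|[|j]]] hj].
  by move/vec3_inj => [-> -> ->]; rewrite eqxx.
case/and3P => /eqP -> /eqP -> /eqP ->.
by apply/rowP => j; rewrite !mxE; case: j => [[|[|[|j]]] hj].
Qed.

Lemma qformZ (k l : F) x y : qform (k *: x) (l *: y) = k * l * qform x y.
Proof. rewrite /qform !crdZ; ring. Qed.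

Lemma mem_line (v : 'rV[F]_3) : v \in line v.
Proof. by apply/imsetP; exists 1; rewrite ?scale1r. Qed.

Lemma lineZ (k : F) (v : 'rV[F]_3) : k != 0 -> line (k *: v) = line v.
Proof.
move=> hk; apply/setP => w; apply/imsetP/imsetP => [[a _ ->]|[a _ ->]].
  by exists (a * k); rewrite // scalerA.
by exists (a / k); rewrite // scalerA mulfVK.
Qed.

Lemma val_pt (a b c : F) : vec3 a b c != 0 -> val (pt a b c) = line (vec3 a b c).
Proof. by move=> h; rewrite /pt insubdK //; apply: line_point. Qed.

Lemma adjP_val (L M : PG F) (x y : 'rV[F]_3) : x != 0 -> y != 0 ->
  val L = line x -> val M = line y -> adjP L M = (L != M) && (qform x y == 0).
Proof.
move=> hx hy eL eM; rewrite /adjP; congr (_ && _); apply/idP/idP.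
  case/existsP => x' /existsP [y' /and5P [] ].
  rewrite eL eM => /imsetP [a _ ->] /imsetP [b _ ->] hx' hy'.
  rewrite qformZ !mulf_eq0; case/orP; first case/orP.
  - by move/eqP=> a0; move: hx'; rewrite a0 scale0r eqxx.
  - by move/eqP=> b0; move: hy'; rewrite b0 scale0r eqxx.
  - by [].
move=> h; apply/existsP; exists x; apply/existsP; exists y.
by rewrite eL eM !mem_line hx hy h.
Qed.


Lemma qform_vec3 (a b c a' b' c' : F) :
  qform (vec3 a b c) (vec3 a' b' c') = a * c' + c * a' - b * b'.
Proof.
rewrite /qform; case: (crd_vec3 a b c) => -> -> ->.
by case: (crd_vec3 a' b' c') => -> -> ->.
Qed.

Definition rep (u : HV F) : 'rV[F]_3 :=
  match u with
  | inl (a, b) => vec3 1 a ((b - a ^+ 2) / 2%:R)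
  | inr None => vec3 0 0 1
  | inr (Some b) => vec3 0 1 b
  end.

Lemma rep_neq0 u : rep u != 0.
Proof. by case: u => [[a b]|[b|]]; rewrite /= vec3_eq0 ?oner_eq0 ?eqxx ?andbF. Qed.

Lemma phi_val (u : HV F) : val (phi u) = line (rep u).
Proof.
have h := rep_neq0 u.
case: u h => [[a b]|[b|]] h /=; [|by rewrite val_pt..].
case: ifP => [/eqP a0|_]; last by rewrite val_pt.
move: h; rewrite /= a0 expr2 mul0r subr0 => h; by rewrite val_pt.
Qed.

Variable h2 : (2%:R : F) != 0.

Lemma phi_inj : injective (@phi F).
Proof.
move=> u v e.
have : rep v \in line (rep u) by rewrite -(phi_val u) e phi_val mem_line.
case/imsetP => k _.
have hv := rep_neq0 v; clear e.
case: u v hv => [[a b]|[b|]] [[c d]|[c|]] /= hv; rewrite vec3Z => /vec3_inj [];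
  rewrite ?mulr0 ?mulr1.
- move=> k1; rewrite -k1 !mul1r => -> /(mulIf (invr_neq0 h2)) /addIr -> //.
- by move=> <-; rewrite mul0r => /eqP; rewrite oner_eq0.
- by move=> <- _; rewrite mul0r => /eqP; rewrite oner_eq0.
- by move=> /eqP; rewrite oner_eq0.
- by move=> _ <-; rewrite mul1r => ->.
- by move=> _ <-; rewrite mul0r => /eqP; rewrite oner_eq0.
- by move=> /eqP; rewrite oner_eq0.
- by move=> _ /eqP; rewrite oner_eq0.
- by [].
Qed.

Lemma phi_adj (u v : HV F) : adjH u v = adjP (phi u) (phi v).
Proof.
rewrite (@adjP_val (phi u) (phi v) (rep u) (rep v) (rep_neq0 u) (rep_neq0 v) (phi_val u) (phi_val v)).
rewrite (inj_eq phi_inj).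
case: u v => [[a b]|[b|]] [[c d]|[c|]] /=; rewrite ?qform_vec3 ?mul0r ?mulr0 ?mul1r ?mulr1
  ?add0r ?addr0 ?sub0r ?subr0 ?oppr_eq0 ?oner_eq0 ?andbF //.
- rewrite /adjG /=; congr (_ && _).
  have -> : (d - c ^+ 2) / 2%:R + (b - a ^+ 2) / 2%:R - a * c =
            (b + d - (a + c) ^+ 2) / 2%:R by field.
  by rewrite mulf_eq0 invr_eq0 (negbTE h2) orbF subr_eq0 eq_sym.
- by rewrite subr_eq0 eq_sym.
- by rewrite subr_eq0 eq_sym.
- by rewrite eqxx.
- by rewrite eqxx.
Qed.

Lemma phi_surj (L : PG F) : exists u, phi u = L.
Proof.
case: L => S hS.
have [v /andP [hv /eqP eS]] := existsP hS.
have ev := vec3_crd v.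
set x0 := crd v 0 in ev; set x1 := crd v 1 in ev; set x2 := crd v 2 in ev.
have key : forall u k, k != 0 -> rep u = k *: v -> phi u = exist _ S hS.
  by move=> u k hk e; apply/val_inj; rewrite /= phi_val e lineZ.
have [x00|x0n] := eqVneq x0 0.
  have [x10|x1n] := eqVneq x1 0.
    have x2n : x2 != 0.
      by apply: contraNneq hv => x20; rewrite ev x00 x10 x20 vec3_eq0 eqxx.
    exists (inr None); apply: (key _ x2^-1); rewrite ?invr_neq0 //.
    by rewrite ev vec3Z x00 x10 mulr0 mulVf.
  exists (inr (Some (x2 / x1))); apply: (key _ x1^-1); rewrite ?invr_neq0 //.
  by rewrite ev vec3Z x00 mulr0 mulVf // mulrC.
exists (inl (x1 / x0, 2%:R * x2 / x0 + (x1 / x0) ^+ 2)).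
apply: (key _ x0^-1); rewrite ?invr_neq0 //.
rewrite ev vec3Z /= mulVf // addrK [x0^-1 * x1]mulrC; congr vec3; field.
by rewrite h2 x0n.
Qed.

End Aux.

Theorem mainTheorem6 (F : finFieldType) (p : nat) :
  prime p -> odd p -> p \in [pchar F] ->
  (exists f : HV F -> PG F,
     bijective f /\ forall u v : HV F, adjH u v = adjP (f u) (f v)) /\
  (bijective (@phi F) /\ forall u v : HV F, adjH u v = adjP (phi u) (phi v)).
Proof.
move=> pp op hp.
have h2 : (2%:R : F) != 0.
  rewrite -(dvdn_pcharf hp); apply/negP => /(dvdn_leq (isT : (0 < 2)%N)) h.
  have p2 : p = 2%N by apply/eqP; rewrite eqn_leq h prime_gt1.
  by move: op; rewrite p2.
have bij : bijective (@phi F).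
  exists (fun L => odflt (inr None) [pick u | phi u == L]).
    move=> u; case: pickP => [u' /eqP /(@phi_inj F h2) -> //|/(_ u)].
    by rewrite eqxx.
  move=> L; case: pickP => [u /eqP //|none].
  by have [u e] := @phi_surj F h2 L; move: (none u); rewrite e eqxx.
split; first by exists (@phi F); split => //; exact: phi_adj.
by split => //; exact: phi_adj.
Qed.
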